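(* In the deterministic tandem system TSC(RO) with $n$ jobs, suppose there are nonnegative reals $\Gamma^j_{\min}(k),\Gamma^j_{\max}(k)$, $\Gamma_{\min}(k),\Gamma_{\max}(k)$ ($1\le j\le J$, $1\le k\le n$) such that the nonnegative interarrival and service times satisfy, for all $k=1,\dots,n$, $$\Gamma^j_{\min}(k)\le\sum_{i=k}^nV^j_i\le\Gamma^j_{\max}(k),\qquad \Gamma_{\min}(k)\le\sum_{i=k}^nU_i\le\Gamma_{\max}(k).$$ With the convention $\Gamma^j_{\min}(n+1)=\Gamma_{\min}(n+1)=0$, the sojourn time of job $n$ satisfies $$W_n\le\max_{n\ge k_J\ge\dots\ge k_1\ge1}\ \sum_{j=1}^{J-1}\big(\Gamma^j_{\max}(k_j)-\Gamma^j_{\min}(k_{j+1}+1)\big)+\Gamma^J_{\max}(k_J)-\Gamma_{\min}(k_1+1).$$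
   Context: TSC(RO): servers $S_1,\dots,S_J$ in tandem, initially empty, $n$ jobs; job $i$ arrives to $S_1$ at time $\sum_{l=1}^iU_l$; each server is FIFO, work-conserving, with infinite buffer; job $i$ needs service $V^j_i\ge0$ at $S_j$, then joins $S_{j+1}$, leaving after $S_J$. $W_n$ is the time between job $n$'s arrival at $S_1$ and its service completion at $S_J$. *)

(* Defs.v *)
From Stdlib Require Import Reals List Arith.
Open Scope R_scope.

(* sum_{i=a}^{b} f i  (empty, i.e. 0, when b < a) *)
Definition sumR (f : nat -> R) (a b : nat) : R :=
  fold_right (fun i acc => f i + acc) 0 (List.seq a (S b - a)).

(* Arrival time of job i at S_1: A_i = sum_{l=1}^i U_l  (A_0 = 0). *)
Definition arr (U : nat -> R) (i : nat) : R := sumR U 1 i.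

(* Departure time of job i from server S_j (j >= 1), FIFO, work-conserving,
   infinite buffer, initially empty system:
     D^0_i = A_i,  D^j_0 = 0,
     D^j_i = max(D^{j-1}_i, D^j_{i-1}) + V^j_i.
   V j i is the service time of job i at server S_j. *)
Fixpoint dep (U : nat -> R) (V : nat -> nat -> R) (j : nat) : nat -> R :=
  match j with
  | O => arr U
  | S j' =>
      fix d (i : nat) : R :=
        match i with
        | O => 0
        | S i' => Rmax (dep U V j' (S i')) (d i') + V (S j') (S i')
        end
  end.

Definition sojourn (U : nat -> R) (V : nat -> nat -> R) (J n : nat) : R :=
  dep U V J n - arr U n.

(* Main.v *)
Require Import Defs.
From Stdlib Require Import Reals List Arith Lra Lia.
Open Scope R_scope.

Lemma fold_acc (f : nat -> R) c l :
  fold_right (fun i acc => f i + acc) c l = fold_right (fun i acc => f i + acc) 0 l + c.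
Proof. induction l; simpl; [lra| rewrite IHl; lra]. Qed.

Lemma fold_le (f g : nat -> R) len : forall a,
  (forall l, (a <= l < a + len)%nat -> f l <= g l) ->
  fold_right (fun i acc => f i + acc) 0 (seq a len) <=
  fold_right (fun i acc => g i + acc) 0 (seq a len).
Proof.
  induction len; simpl; intros a H; [lra|].
  apply Rplus_le_compat; [apply H; lia| apply IHlen; intros; apply H; lia].
Qed.

Lemma fold_ext (f g : nat -> R) len : forall a,
  (forall l, (a <= l < a + len)%nat -> f l = g l) ->
  fold_right (fun i acc => f i + acc) 0 (seq a len) =
  fold_right (fun i acc => g i + acc) 0 (seq a len).
Proof.
  induction len; simpl; intros a H; [lra|].
  rewrite (H a) by lia. rewrite (IHlen (S a)); [reflexivity|]. intros; apply H; lia.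
Qed.

Lemma fold_nonneg (f : nat -> R) len : forall a,
  (forall l, (a <= l < a + len)%nat -> 0 <= f l) ->
  0 <= fold_right (fun i acc => f i + acc) 0 (seq a len).
Proof.
  induction len; simpl; intros a H; [lra|].
  apply Rplus_le_le_0_compat; [apply H; lia| apply IHlen; intros; apply H; lia].
Qed.

Lemma sumR_le f g a b : (forall l, (a <= l <= b)%nat -> f l <= g l) ->
  sumR f a b <= sumR g a b.
Proof. intros H; unfold sumR; apply fold_le; intros; apply H; lia. Qed.

Lemma sumR_ext f g a b : (forall l, (a <= l <= b)%nat -> f l = g l) ->
  sumR f a b = sumR g a b.
Proof. intros H; unfold sumR; apply fold_ext; intros; apply H; lia. Qed.

Lemma sumR_nonneg f a b : (forall l, (a <= l <= b)%nat -> 0 <= f l) -> 0 <= sumR f a b.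
Proof. intros H; unfold sumR; apply fold_nonneg; intros; apply H; lia. Qed.

Lemma sumR_empty f a b : (b < a)%nat -> sumR f a b = 0.
Proof. intros; unfold sumR; replace (S b - a)%nat with 0%nat by lia; reflexivity. Qed.

Lemma sumR_cons f a b : (a <= b)%nat -> sumR f a b = f a + sumR f (S a) b.
Proof. intros; unfold sumR; replace (S b - a)%nat with (S (S b - S a)) by lia; reflexivity. Qed.

Lemma sumR_snoc f a b : (a <= S b)%nat -> sumR f a (S b) = sumR f a b + f (S b).
Proof.
  intros; unfold sumR. replace (S (S b) - a)%nat with (S (S b - a)) by lia.
  rewrite seq_S, fold_right_app. rewrite fold_acc.
  replace (a + (S b - a))%nat with (S b) by lia. cbn [fold_right]. lra.
Qed.

Lemma sumR_split f a m b : (a <= S m)%nat -> (m <= b)%nat ->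
  sumR f a b = sumR f a m + sumR f (S m) b.
Proof.
  intros Ha; induction b; intros Hb.
  - assert (m = 0%nat) by lia; subst. rewrite (sumR_empty f 1 0) by lia. lra.
  - destruct (Nat.eq_dec m (S b)) as [->|Hne].
    + rewrite (sumR_empty f (S (S b)) (S b)) by lia; lra.
    + rewrite sumR_snoc by lia. rewrite (sumR_snoc f (S m)) by lia.
      rewrite IHb by lia. lra.
Qed.

Lemma dep_S U V p i :
  dep U V (S p) (S i) = Rmax (dep U V p (S i)) (dep U V (S p) i) + V (S p) (S i).
Proof. reflexivity. Qed.

Lemma dep_S0 U V p : dep U V (S p) 0 = 0.
Proof. reflexivity. Qed.

Lemma dep_nonneg J n U V
  (HU : forall i, (1 <= i <= n)%nat -> 0 <= U i)
  (HV : forall j i, (1 <= j <= J)%nat -> (1 <= i <= n)%nat -> 0 <= V j i) :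
  forall j i, (j <= J)%nat -> (i <= n)%nat -> 0 <= dep U V j i.
Proof.
  intros [|j] i Hj Hi.
  - simpl. unfold arr. apply sumR_nonneg. intros; apply HU; lia.
  - induction i.
    + rewrite dep_S0; lra.
    + rewrite dep_S. pose proof (Rmax_r (dep U V j (S i)) (dep U V (S j) i)).
      pose proof (IHi ltac:(lia)). pose proof (HV (S j) (S i) ltac:(lia) ltac:(lia)). lra.
Qed.

Definition gk (V : nat -> nat -> R) n (k : nat -> nat) l :=
  sumR (V l) (k l) n - sumR (V l) (S (k (S l))) n.

Lemma inner J n U V
  (HU : forall i, (1 <= i <= n)%nat -> 0 <= U i)
  (HV : forall j i, (1 <= j <= J)%nat -> (1 <= i <= n)%nat -> 0 <= V j i)
  p (Hp : (S p <= J)%nat)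
  (Hvert : forall i, (1 <= i <= n)%nat -> exists k : nat -> nat,
     (1 <= k 1%nat)%nat /\ (forall l, (1 <= l < S p)%nat -> (k l <= k (S l))%nat) /\
     (k (S p) <= i)%nat /\
     dep U V p i + V (S p) i <= arr U (k 1%nat) + sumR (gk V n k) 1 p
        + sumR (V (S p)) (k (S p)) n - sumR (V (S p)) (S i) n) :
  forall i, (1 <= i <= n)%nat -> exists k : nat -> nat,
     (1 <= k 1%nat)%nat /\ (forall l, (1 <= l < S p)%nat -> (k l <= k (S l))%nat) /\
     (k (S p) <= i)%nat /\
     dep U V (S p) i <= arr U (k 1%nat) + sumR (gk V n k) 1 p
        + sumR (V (S p)) (k (S p)) n - sumR (V (S p)) (S i) n.
Proof.
  induction i; intros Hi; [lia|].
  rewrite dep_S.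
  destruct (Rle_dec (dep U V p (S i)) (dep U V (S p) i)) as [r|r].
  - rewrite Rmax_right by exact r. destruct i as [|i].
    + destruct (Hvert 1%nat Hi) as [k [H1 [H2 [H3 H4]]]].
      exists k; repeat split; auto.
      pose proof (dep_nonneg J n U V HU HV p 1 ltac:(lia) ltac:(lia)).
      rewrite dep_S0. lra.
    + destruct (IHi ltac:(lia)) as [k [H1 [H2 [H3 H4]]]].
      exists k; repeat split; auto.
      rewrite (sumR_cons (V (S p)) (S (S i)) n) in H4 by lia. lra.
  - rewrite Rmax_left by lra. apply Hvert; exact Hi.
Qed.

Lemma mainQ J n U V
  (HU : forall i, (1 <= i <= n)%nat -> 0 <= U i)
  (HV : forall j i, (1 <= j <= J)%nat -> (1 <= i <= n)%nat -> 0 <= V j i) :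
  forall p, (S p <= J)%nat -> forall i, (1 <= i <= n)%nat -> exists k : nat -> nat,
     (1 <= k 1%nat)%nat /\ (forall l, (1 <= l < S p)%nat -> (k l <= k (S l))%nat) /\
     (k (S p) <= i)%nat /\
     dep U V (S p) i <= arr U (k 1%nat) + sumR (gk V n k) 1 p
        + sumR (V (S p)) (k (S p)) n - sumR (V (S p)) (S i) n.
Proof.
  induction p as [|q IHq]; intros Hp; apply (inner J n U V HU HV); auto; intros i Hi.
  - exists (fun _ => i). repeat split; try lia.
    rewrite (sumR_empty _ 1 0) by lia. simpl dep.
    rewrite (sumR_cons (V 1%nat) i n) by lia. lra.
  - destruct (IHq ltac:(lia) i Hi) as [k [H1 [H2 [H3 H4]]]].
    exists (fun l => if Nat.eqb l (S (S q)) then i else k l).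
    simpl (Nat.eqb 1 (S (S q))). rewrite Nat.eqb_refl.
    repeat split; auto.
    + intros l Hl. destruct (Nat.eqb_spec l (S (S q))); [lia|].
      destruct (Nat.eqb_spec (S l) (S (S q))).
      * assert (l = S q) by lia. subst. lia.
      * apply H2; lia.
    + rewrite sumR_snoc by lia.
      rewrite (sumR_ext (gk V n (fun l => if Nat.eqb l (S (S q)) then i else k l)) (gk V n k) 1 q).
      2:{ intros l Hl. unfold gk.
          destruct (Nat.eqb_spec l (S (S q))); [lia|].
          destruct (Nat.eqb_spec (S l) (S (S q))); [lia|]. reflexivity. }
      unfold gk at 2. rewrite Nat.eqb_refl.
      destruct (Nat.eqb_spec (S q) (S (S q))); [lia|].
      rewrite (sumR_cons (V (S (S q))) i n) by lia. lra.
Qed.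

Theorem theorem3
  (J n : nat) (HJ : (1 <= J)%nat) (Hn : (1 <= n)%nat)
  (U : nat -> R) (V : nat -> nat -> R)
  (GVmin GVmax : nat -> nat -> R) (GUmin GUmax : nat -> R)
  (HU : forall i, (1 <= i <= n)%nat -> 0 <= U i)
  (HV : forall j i, (1 <= j <= J)%nat -> (1 <= i <= n)%nat -> 0 <= V j i)
  (HGV : forall j k, (1 <= j <= J)%nat -> (1 <= k <= n)%nat ->
           0 <= GVmin j k /\ 0 <= GVmax j k)
  (HGU : forall k, (1 <= k <= n)%nat -> 0 <= GUmin k /\ 0 <= GUmax k)
  (HVb : forall j k, (1 <= j <= J)%nat -> (1 <= k <= n)%nat ->
           GVmin j k <= sumR (V j) k n <= GVmax j k)
  (HUb : forall k, (1 <= k <= n)%nat ->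
           GUmin k <= sumR U k n <= GUmax k)
  (HconvV : forall j, (1 <= j <= J)%nat -> GVmin j (S n) = 0)
  (HconvU : GUmin (S n) = 0) :
  exists k : nat -> nat,
    (1 <= k 1%nat)%nat /\
    (forall j, (1 <= j < J)%nat -> (k j <= k (S j))%nat) /\
    (k J <= n)%nat /\
    sojourn U V J n <=
      sumR (fun j => GVmax j (k j) - GVmin j (S (k (S j)))) 1 (J - 1)
      + GVmax J (k J) - GUmin (S (k 1%nat)).
Proof.
  destruct J as [|p]; [lia|].
  destruct (mainQ (S p) n U V HU HV p ltac:(lia) n ltac:(lia)) as [k [H1 [H2 [H3 H4]]]].
  exists k; repeat split; auto.
  assert (Hch : forall b a, (1 <= a <= b)%nat -> (b <= S p)%nat -> (k a <= k b)%nat).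
  { induction b; intros a Ha Hb; [lia|].
    destruct (Nat.eq_dec a (S b)) as [->|]; [lia|].
    pose proof (IHb a ltac:(lia) ltac:(lia)). pose proof (H2 b ltac:(lia)). lia. }
  assert (Hk : forall l, (1 <= l <= S p)%nat -> (1 <= k l <= n)%nat).
  { intros l Hl. pose proof (Hch l 1%nat ltac:(lia) ltac:(lia)).
    pose proof (Hch (S p) l ltac:(lia) ltac:(lia)). lia. }
  replace (S p - 1)%nat with p by lia.
  rewrite (sumR_empty (V (S p)) (S n) n) in H4 by lia.
  unfold sojourn.
  assert (Ha : arr U n = arr U (k 1%nat) + sumR U (S (k 1%nat)) n).
  { unfold arr. apply sumR_split; pose proof (Hk 1%nat); lia. }
  assert (HGu : GUmin (S (k 1%nat)) <= sumR U (S (k 1%nat)) n).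
  { destruct (Nat.lt_ge_cases (k 1%nat) n).
    - apply HUb; lia.
    - pose proof (Hk 1%nat ltac:(lia)). assert (k 1%nat = n) as -> by lia.
      rewrite sumR_empty by lia. rewrite HconvU. lra. }
  assert (Hs : sumR (gk V n k) 1 p <=
               sumR (fun j => GVmax j (k j) - GVmin j (S (k (S j)))) 1 p).
  { apply sumR_le. intros l Hl. unfold gk.
    pose proof (HVb l (k l) ltac:(lia) (Hk l ltac:(lia))).
    assert (GVmin l (S (k (S l))) <= sumR (V l) (S (k (S l))) n).
    { pose proof (Hk (S l) ltac:(lia)).
      destruct (Nat.lt_ge_cases (k (S l)) n).
      - apply HVb; lia.
      - assert (k (S l) = n) as -> by lia.
        rewrite sumR_empty by lia. rewrite HconvV by lia. lra. }
    lra. }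
  pose proof (HVb (S p) (k (S p)) ltac:(lia) (Hk (S p) ltac:(lia))).
  lra.
Qed.
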